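(* Suppose $\lambda$ is a regular cardinal and $S=\langle I\times n,\mathcal{R}\rangle$ is a $\lambda$-system with $n<\omega$ and $|\mathcal{R}|<\omega$. Then $S$ has a cofinal branch.
   Context: Let $\lambda$ be an infinite regular cardinal. A relation $R$ is tree-like if $a<_R c$ and $b<_R c$ imply $a,b$ are $R$-comparable ($a=b$, $a<_Rb$ or $b<_Ra$). A $\lambda$-system $\langle I\times\kappa,\mathcal{R}\rangle$ consists of an unbounded $I\subseteq\lambda$, $0<\kappa<\lambda$, levels $S_\alpha=\{\alpha\}\times\kappa$ for $\alpha\in I$ (with $S$ denoting their union), and a set $\mathcal{R}$ of binary transitive tree-like relations on $S$ with $|\mathcal{R}|<\lambda$, such that $(\alpha_0,\beta_0)<_R(\alpha_1,\beta_1)$ implies $\alpha_0<\alpha_1$, and for all $\alpha_0<\alpha_1$ in $I$ there are $\beta_0,\beta_1<\kappa$ and $R\in\mathcal{R}$ with $(\alpha_0,\beta_0)<_R(\alpha_1,\beta_1)$. A branch through $R$ is a set of pairwise $R$-comparable elements; it is cofinal if it meets $S_\alpha$ for unboundedly many $\alpha\in I$. *)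

(* Defs.v *)
From mathcomp Require Import all_boot.

Set Implicit Arguments.
Unset Strict Implicit.
Unset Printing Implicit Defensive.

(* An infinite regular cardinal lambda, represented (up to order isomorphism)
   by a type L with a strict well-order lt whose order type is lambda. *)
Definition ord_le (L : Type) (lt : L -> L -> Prop) (x y : L) : Prop :=
  lt x y \/ x = y.

Definition injective_fun (A B : Type) (f : A -> B) : Prop :=
  forall x y, f x = f y -> x = y.

Definition unbounded (L : Type) (lt : L -> L -> Prop) (A : L -> Prop) : Prop :=
  forall x, exists y, A y /\ ord_le lt x y.

Record infinite_regular_cardinal (L : Type) (lt : L -> L -> Prop) : Prop := {
  irc_wf : well_founded lt;
  irc_trans : forall x y z, lt x y -> lt y z -> lt x z;
  irc_irrefl : forall x, ~ lt x x;
  irc_total : forall x y, lt x y \/ x = y \/ lt y x;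
  irc_infinite : exists f : nat -> L, injective_fun f;
  (* lambda is a cardinal: every proper initial segment has smaller cardinality *)
  irc_initial : forall x, ~ (exists f : L -> L, injective_fun f /\ forall y, lt (f y) x);
  (* lambda is regular: every unbounded subset has cardinality lambda *)
  irc_regular : forall A : L -> Prop, unbounded lt A ->
      exists f : L -> L, injective_fun f /\ forall y, A (f y)
}.

(* A lambda-system <I x kappa, R> with kappa = n, R = {R_k | k < m}
   (a finite family; |R| < lambda is then automatic since lambda is infinite). *)
Definition inS (L : Type) (n : nat) (I : L -> Prop) (a : L * 'I_n) : Prop := I a.1.

Record lambda_system (L : Type) (lt : L -> L -> Prop) (I : L -> Prop)
    (n m : nat) (R : 'I_m -> L * 'I_n -> L * 'I_n -> Prop) : Prop := {
  ls_unbounded : unbounded lt I;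
  ls_kappa_pos : 0 < n;
  ls_trans : forall k a b c, inS I a -> inS I b -> inS I c ->
      R k a b -> R k b c -> R k a c;
  ls_treelike : forall k a b c, inS I a -> inS I b -> inS I c ->
      R k a c -> R k b c -> a = b \/ R k a b \/ R k b a;
  ls_levels : forall k a b, inS I a -> inS I b -> R k a b -> lt a.1 b.1;
  ls_linked : forall a0 a1, I a0 -> I a1 -> lt a0 a1 ->
      exists (b0 b1 : 'I_n) (k : 'I_m), R k (a0, b0) (a1, b1)
}.

Definition branch (L : Type) (n : nat) (I : L -> Prop)
    (Rk : L * 'I_n -> L * 'I_n -> Prop) (B : L * 'I_n -> Prop) : Prop :=
  (forall a, B a -> inS I a) /\
  (forall a b, B a -> B b -> a = b \/ Rk a b \/ Rk b a).

Definition cofinal (L : Type) (lt : L -> L -> Prop) (n : nat) (I : L -> Prop)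
    (B : L * 'I_n -> Prop) : Prop :=
  unbounded lt (fun alpha => I alpha /\ exists beta : 'I_n, B (alpha, beta)).

(* Main.v *)
Require Import Defs.
From mathcomp Require Import all_boot.
From mathcomp Require Import boolp classical_sets filter.
From Stdlib Require Import Lia.
Local Open Scope classical_set_scope.
From mathcomp Require Import zify.

Lemma no_max (L : Type) (lt : L -> L -> Prop) :
  infinite_regular_cardinal lt -> forall x, exists y, lt x y.
Proof.
move=> H M; apply: contrapT => nM.
have le y : lt y M \/ y = M.
  case: (irc_total H y M) => [|[]]; [by left|by right|].
  by move=> hMy; exfalso; apply: nM; exists y.
have [g ginj] := irc_infinite H.
pose h i := if pselect (g (2*i) = M) then g (2*i+1) else g (2*i).
have hM i : h i <> M.
  rewrite /h; case: pselect => // e1 e2.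
  by have := ginj _ _ (etrans e2 (esym e1)); lia.
have hinj i j : h i = h j -> i = j.
  rewrite /h; case: pselect => ?; case: pselect => ? /ginj; lia.
pose f y := if pselect (y = M) then h 0 else
  match pselect (exists i, y = h i) with
  | left e => h (projT1 (cid e)).+1
  | right _ => y end.
have fM : f M = h 0 by rewrite /f; case: pselect.
have fh i : f (h i) = h i.+1.
  rewrite /f; case: pselect => [e|ne0]; first by exfalso; exact: (hM i).
  case: pselect => [e|ne]; last by exfalso; apply: ne; exists i.
  by case: (cid e) => j /= /hinj ->.
have fo y : y <> M -> ~ (exists i, y = h i) -> f y = y.
  move=> yM nP; rewrite /f; case: pselect => [e|ne0]; first by [].
  by case: pselect.
have cls y : y = M \/ (exists i, y = h i) \/ (y <> M /\ ~ (exists i, y = h i)).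
  case: (pselect (y = M)) => [|?]; first by left.
  case: (pselect (exists i, y = h i)) => [|?]; first by right; left.
  by right; right.
apply: (irc_initial H (x:=M)); exists f; split; last first.
  move=> y; have : f y <> M.
    case: (cls y) => [->|[[i ->]|[yM ynP]]]; rewrite ?fM ?fh ?fo //; exact: hM.
  by case: (le (f y)).
  move=> a b.
  case: (cls a) => [->|[[i ->]|[aM anP]]]; case: (cls b) => [->|[[j ->]|[bM bnP]]] //;
    rewrite ?fM ?fh ?fo //.
  all: move=> e; first [ by move/hinj: e | by move/hinj: e => [->]
    | by exfalso; apply: bnP; eexists; exact: (esym e)
    | by exfalso; apply: anP; eexists; exact: e ].
Qed.

Lemma ufin (X : Type) (T : finType) (G : set_system X) (P : T -> set X) :
  UltraFilter G -> G (fun x => exists t, P t x) -> exists t, G (P t).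
Proof.
move=> UG GP; apply: contrapT => nt.
have hC t : G (~` P t).
  case: (in_ultra_setVsetC (P t) UG) => // Gt; exfalso; apply: nt; by exists t.
have : G (fun x => forall t, (~` P t) x) by apply: filter_forall.
move=> GA; apply: (filter_not_empty G).
apply: filterS (filterI GP GA) => x [[t Pt] /(_ t)]; by [].
Qed.

Theorem mainTheorem7 (L : Type) (lt : L -> L -> Prop) (I : L -> Prop)
    (n m : nat) (R : 'I_m -> L * 'I_n -> L * 'I_n -> Prop) :
  infinite_regular_cardinal lt ->
  lambda_system lt I R ->
  exists (k : 'I_m) (B : L * 'I_n -> Prop), branch I (R k) B /\ cofinal lt I B.
Proof.
move=> H S.
have nomax := @no_max _ _ H.
pose Bx x := [set y | I y /\ lt x y].
have FF : ProperFilter (filter_from setT Bx).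
  apply: filter_from_proper; last first.
    move=> x _; have [z xz] := nomax x.
    have [y [Iy zy]] := ls_unbounded S z; exists y; split => //.
    by case: zy => [zy|<-] //; exact: (irc_trans H xz zy).
  apply: filter_fromT_filter.
    by have [g _] := irc_infinite H; exists (g 0).
  move=> i j; case: (irc_total H i j) => [ij|[<-|ji]].
  - exists j => y [Iy ly]; split; split => //; exact: (irc_trans H ij ly).
  - by exists i.
  - exists i => y [Iy ly]; split; split => //; exact: (irc_trans H ji ly).
have [G [UG sub]] := ultraFilterLemma FF.
have GB x : G (Bx x) by apply: sub; exists x.
have GI : G I.
  have [g _] := irc_infinite H.
  by apply: filterS (GB (g 0)) => y [].
pose Y (a : L) (t : ('I_n * 'I_m * 'I_n)%type) :=
  fun b => R t.1.2 (a, t.1.1) (b, t.2).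
have cov a : I a -> exists t, G (Y a t).
  move=> Ia; apply: ufin => //; apply: filterS (GB a) => b [Ib ab].
  have [b0 [b1 [k Rk]]] := ls_linked S Ia Ib ab.
  by exists (b0, k, b1).
have [t GA] : exists t, G (fun a => I a /\ G (Y a t)).
  apply: ufin => //; apply: filterS GI => a Ia.
  by have [t Gt] := cov a Ia; exists t.
move: t GA => [[b0 k] b1] GA.
exists k, (fun p => p.2 = b0 /\ I p.1 /\ G (Y p.1 (b0, k, b1))); split.
  split; first by move=> p [_ []].
  move=> [a b'] [c d'] /= [-> [Ia Ga]] [-> [Ic Gc]].
  have [y [[y1 y2] y3]] := filter_ex (filterI (filterI Ga Gc) GI).
  exact: (ls_treelike S (c := (y, b1))).
move=> x.
have [y [[Iy Gy] [_ xy]]] := filter_ex (filterI GA (GB x)).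
by exists y; split; [split => //; exists b0 | left].
Qed.
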